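(* Let $P$ be a finite poset and $R$ a commutative unital ring. Then $Z^3_3(P,R)=J^3_2(P,R)$. In particular, $Z^3_3(P,R)$ is an ideal of $I^3(P,R)$.
   Context: For a finite poset $P$, $P^3_\le=\{(x,y,z)\in P^3: x\le y\le z\}$, and $I^3(P,R)$ is the $R$-module of functions $f:P^3_\le\to R$ with multiplication $(fg)(x_1,x_2,x_3)=\sum f(x_1,y_1,y_2)g(y_1,y_2,x_3)$ over all $x_1\le y_1\le x_2\le y_2\le x_3$. For $a\le b$, $l(a,b)$ is the maximum of $|C|-1$ over chains $C$ in the interval $[a,b]$. $J^3_k(P,R)=\{f: f(x_1,x_2,x_3)=0 \text{ whenever } l(x_1,x_3)<k\}$. $[f,g]=fg-gf$; for subsets $U,V$, $[U,V]$ is the $R$-submodule spanned by all $[u,v]$, $u\in U,v\in V$. $Z^3_1(P,R)=J^3_1(P,R)$, $Z^3_2(P,R)=[Z^3_1(P,R),Z^3_1(P,R)]$, $Z^3_3(P,R)=[Z^3_2(P,R),Z^3_2(P,R)]$. *)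

(* Defs.v *)
From HB Require Import structures.
From mathcomp Require Import all_boot all_order all_algebra.
Set Implicit Arguments. Unset Strict Implicit. Unset Printing Implicit Defensive.
Import Order.TTheory GRing.Theory.
Local Open Scope ring_scope.
Local Open Scope order_scope.

Section Incidence3.
Variables (d : Order.disp_t) (P : finPOrderType d) (R : comPzRingType).

(* P^3_<= = {(x,y,z) : x <= y <= z}, encoded as ((x,y),z). *)
Definition chain3 := {t : P * P * P | (t.1.1 <= t.1.2) && (t.1.2 <= t.2)}.

Local Notation I3 := {ffun chain3 -> R}.

(* value of f at (x,y,z), 0 if (x,y,z) is not in P^3_<= (never used then) *)
Definition ev (f : I3) (x y z : P) : R :=
  match @insub _ (fun t : P * P * P => (t.1.1 <= t.1.2) && (t.1.2 <= t.2))
               chain3 (x, y, z) with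
  | Some t => f t
  | None => 0
  end.

Definition mul3 (f g : I3) : I3 :=
  [ffun t : chain3 =>
     let: (x1, x2, x3) := val t in
     \sum_(y1 : P | ((x1 <= y1) && (y1 <= x2))%O)
       \sum_(y2 : P | ((x2 <= y2) && (y2 <= x3))%O) ev f x1 y1 y2 * ev g y1 y2 x3].

Definition scale3 (r : R) (f : I3) : I3 := [ffun t => r * f t].

Definition bracket3 (f g : I3) : I3 := mul3 f g - mul3 g f.

(* [U,V]: the R-submodule spanned by all [u,v], u in U, v in V *)
Definition brackets (U V : I3 -> Prop) (h : I3) : Prop :=
  exists s : seq (R * I3 * I3),
    (forall p, p \in s -> U p.1.2 /\ V p.2) /\
    h = \sum_(p <- s) scale3 p.1.1 (bracket3 p.1.2 p.2).

Definition is_chain (C : {set P}) : bool :=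
  [forall x in C, forall y in C, (x <= y) || (y <= x)].

Definition lenP (a b : P) : nat :=
  (\max_(C : {set P} | is_chain C && (C \subset [set x | ((a <= x) && (x <= b))%O])) #|C|) - 1.

Definition J3 (k : nat) (f : I3) : Prop :=
  forall t : chain3, (lenP (val t).1.1 (val t).2 < k)%N -> f t = 0.

Definition Z3_1 : I3 -> Prop := J3 1.
Definition Z3_2 : I3 -> Prop := brackets Z3_1 Z3_1.
Definition Z3_3 : I3 -> Prop := brackets Z3_2 Z3_2.

End Incidence3.

Notation I3 P R := {ffun chain3 P -> R}.

(* Main.v *)
Require Import Defs.
From HB Require Import structures.
From mathcomp Require Import all_boot all_order all_algebra.
Set Implicit Arguments. Unset Strict Implicit. Unset Printing Implicit Defensive.
Import Order.TTheory GRing.Theory.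
Local Open Scope ring_scope.
Local Open Scope order_scope.

Section Aux.
Variables (d : Order.disp_t) (P : finPOrderType d) (R : comPzRingType).
Local Notation I3 := {ffun chain3 P -> R}.
Local Notation ch x y z := ((x <= y) && (y <= z)).

Definition mkf (G : P * P * P -> R) : I3 := [ffun t => G (val t)].

Lemma ev_mkf G x y z : ev (mkf G) x y z = if ch x y z then G (x, y, z) else 0.
Proof.
rewrite /ev; case: insubP => [u Hu <- | Hn]; first by rewrite ffunE Hu.
by rewrite (negbTE Hn).
Qed.

Lemma ev_chain (f : I3) x y z (H : ch x y z) : ev f x y z = f (Sub (x, y, z) H).
Proof. by rewrite /ev insubT. Qed.

Lemma ev_val (f : I3) (t : chain3 P) : ev f (val t).1.1 (val t).1.2 (val t).2 = f t.
Proof.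
case: t => [[[x y] z] H] /=; rewrite ev_chain; congr (f _); exact: val_inj.
Qed.

Lemma ev_nchain (f : I3) x y z : ~~ ch x y z -> ev f x y z = 0.
Proof. by move=> Hn; rewrite /ev insubF //; apply: negbTE. Qed.

Lemma ev_add (f g : I3) x y z : ev (f + g) x y z = ev f x y z + ev g x y z.
Proof.
case: (boolP (ch x y z)) => H; last by rewrite !ev_nchain // addr0.
by rewrite !(ev_chain _ H) ffunE.
Qed.

Lemma ev_opp (f : I3) x y z : ev (- f) x y z = - ev f x y z.
Proof.
case: (boolP (ch x y z)) => H; last by rewrite !ev_nchain // oppr0.
by rewrite !(ev_chain _ H) ffunE.
Qed.

Lemma ev_scale r (f : I3) x y z : ev (scale3 r f) x y z = r * ev f x y z.
Proof.
case: (boolP (ch x y z)) => H; last by rewrite !ev_nchain // mulr0.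
by rewrite !(ev_chain _ H) ffunE.
Qed.

Lemma eq_ev (f g : I3) : (forall x y z, ch x y z -> ev f x y z = ev g x y z) -> f = g.
Proof.
move=> H; apply/ffunP => t; rewrite -!ev_val; apply: H.
by case: t => [[[x y] z] Ht].
Qed.

Lemma ev_mul (f g : I3) x1 x2 x3 : ch x1 x2 x3 ->
  ev (mul3 f g) x1 x2 x3 =
  \sum_(y1 : P | ((x1 <= y1) && (y1 <= x2))%O)
       \sum_(y2 : P | ((x2 <= y2) && (y2 <= x3))%O) ev f x1 y1 y2 * ev g y1 y2 x3.
Proof. by move=> H; rewrite (ev_chain _ H) ffunE. Qed.


Lemma sum_pin1 (C : pred P) (F : P -> R) a :
  (forall y, y != a -> F y = 0) -> \sum_(y | C y) F y = if C a then F a else 0.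
Proof.
move=> H; rewrite big_mkcond (bigD1 a) //= big1 ?addr0 // => y Hy.
by case: ifP => // _; apply: H.
Qed.

Lemma sum_pin2 (C1 C2 : pred P) (F : P -> P -> R) a b :
  (forall y1 y2, (y1 != a) || (y2 != b) -> F y1 y2 = 0) ->
  \sum_(y1 | C1 y1) \sum_(y2 | C2 y2) F y1 y2 = if C1 a && C2 b then F a b else 0.
Proof.
move=> H.
have inner y1 : \sum_(y2 | C2 y2) F y1 y2 = if C2 b then F y1 b else 0.
  by apply: sum_pin1 => y2 Hy; apply: H; rewrite Hy orbT.
rewrite (eq_bigr _ (fun y1 _ => inner y1)) (@sum_pin1 _ _ a).
  by case: (C1 a); case: (C2 b).
by move=> y Hy; case: ifP => // _; apply: H; rewrite Hy.
Qed.

Lemma sum_two (C : pred P) (F : P -> R) a b : a != b ->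
  (forall y, C y = (y == a) || (y == b)) -> \sum_(y | C y) F y = F a + F b.
Proof.
move=> ab HC; rewrite (bigD1 a) ?HC ?eqxx //=; congr (_ + _).
apply: big_pred1 => y /=; rewrite HC; case: (eqVneq y a) => [->|] //=.
by rewrite (negbTE ab).
by rewrite andbT.
Qed.

Lemma sum_one (C : pred P) (F : P -> R) a :
  (forall y, C y = (y == a)) -> \sum_(y | C y) F y = F a.
Proof. by move=> HC; apply: big_pred1. Qed.

Section Br.
Variables U V : I3 -> Prop.

Lemma scale3_0 r : scale3 r (0 : I3) = 0.
Proof. by apply/ffunP => t; rewrite !ffunE mulr0. Qed.
Lemma scale3_D r (f g : I3) : scale3 r (f + g) = scale3 r f + scale3 r g.
Proof. by apply/ffunP => t; rewrite !ffunE mulrDr. Qed.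
Lemma scale3_A r s (f : I3) : scale3 r (scale3 s f) = scale3 (r * s) f.
Proof. by apply/ffunP => t; rewrite !ffunE mulrA. Qed.
Lemma scale3_1 (f : I3) : scale3 1 f = f.
Proof. by apply/ffunP => t; rewrite !ffunE mul1r. Qed.
Lemma scale3_N1 (f : I3) : scale3 (-1) f = - f.
Proof. by apply/ffunP => t; rewrite !ffunE mulN1r. Qed.
Lemma scale3_0l (f : I3) : scale3 0 f = 0.
Proof. by apply/ffunP => t; rewrite !ffunE mul0r. Qed.

Lemma br0 : brackets U V 0.
Proof. by exists [::]; split => //; rewrite big_nil. Qed.

Lemma brD f g : brackets U V f -> brackets U V g -> brackets U V (f + g).
Proof.
move=> [s1 [H1 ->]] [s2 [H2 ->]]; exists (s1 ++ s2); split; last by rewrite big_cat.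
by move=> p; rewrite mem_cat => /orP [] ?; [apply: H1 | apply: H2].
Qed.

Lemma brZ r f : brackets U V f -> brackets U V (scale3 r f).
Proof.
move=> [s [H ->]]; exists (map (fun p => (r * p.1.1, p.1.2, p.2)) s); split.
  by move=> p /mapP [q Hq ->] /=; apply: H.
elim: s {H} => [|q s IH]; first by rewrite !big_nil scale3_0.
by rewrite !big_cons scale3_D IH scale3_A.
Qed.

Lemma brN f : brackets U V f -> brackets U V (- f).
Proof. by move=> H; rewrite -scale3_N1; apply: brZ. Qed.

Lemma brB f g : brackets U V f -> brackets U V g -> brackets U V (f - g).
Proof. by move=> Hf Hg; apply: brD => //; apply: brN. Qed.

Lemma br1 u v : U u -> V v -> brackets U V (bracket3 u v).
Proof. by move=> Hu Hv; exists [:: (1, u, v)]; split;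
  [move=> p; rewrite inE => /eqP -> | rewrite big_seq1 scale3_1]. Qed.

Lemma brsum (I : finType) (C : pred I) (F : I -> I3) :
  (forall i, C i -> brackets U V (F i)) -> brackets U V (\sum_(i | C i) F i).
Proof. by move=> H; apply: big_ind => //; [apply: br0 | apply: brD]. Qed.

Lemma br_ind (Q : I3 -> Prop) : Q 0 -> (forall f g, Q f -> Q g -> Q (f + g)) ->
  (forall r f, Q f -> Q (scale3 r f)) -> (forall u v, U u -> V v -> Q (bracket3 u v)) ->
  forall f, brackets U V f -> Q f.
Proof.
move=> Q0 QD QZ QB f [s [H ->]].
elim: s H => [|q s IH] H; first by rewrite big_nil.
rewrite big_cons; apply: QD; last by apply: IH => p Hp; apply: H; rewrite inE Hp orbT.
by apply: QZ; have [] := H q (mem_head _ _); apply: QB.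
Qed.
End Br.


Lemma lenP_ge (a b c : P) : a <= b -> b <= c -> (#|[set a; b; c]| - 1 <= lenP a c)%N.
Proof.
move=> ab bc; rewrite /lenP; apply: leq_sub2r; apply: leq_bigmax_cond.
have ac := le_trans ab bc.
apply/andP; split.
  apply/forallP => x; apply/implyP => Hx; apply/forallP => y; apply/implyP => Hy.
  move: Hx Hy; rewrite !inE => /orP [/orP [/eqP->|/eqP->]|/eqP->] /orP [/orP [/eqP->|/eqP->]|/eqP->];
  by rewrite ?lexx ?ab ?bc ?ac ?orbT.
apply/subsetP => x; rewrite !inE => /orP [/orP [/eqP->|/eqP->]|/eqP->]; by rewrite ?lexx ?ab ?bc ?ac.
Qed.

Lemma lenP_le (a c : P) : (forall y, a <= y -> y <= c -> (y == a) || (y == c)) ->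
  (lenP a c <= #|[set a; c]| - 1)%N.
Proof.
move=> H; apply: leq_sub2r; apply/bigmax_leqP => C /andP [_ /subsetP HC].
apply: subset_leq_card; apply/subsetP => x Hx; have := HC x Hx.
by rewrite !inE => /andP [h1 h2]; apply: H.
Qed.

Lemma lenP_diag (x : P) : lenP x x = 0%N.
Proof.
apply/eqP; rewrite -leqn0; apply: leq_trans (lenP_le _) _.
  move=> y h1 h2; have -> : y = x by apply: le_anti; rewrite h1 h2.
  by rewrite eqxx.
by rewrite cards2 eqxx.
Qed.

Lemma lenP_1 (a b : P) : a < b -> (1 <= lenP a b)%N.
Proof.
move=> ab; apply: leq_trans (lenP_ge (lexx a) (ltW ab)).
by rewrite setUid cards2 (lt_eqF ab).
Qed.

Lemma lenP_2 (a b c : P) : a < b -> b < c -> (2 <= lenP a c)%N.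
Proof.
move=> ab bc; apply: leq_trans (lenP_ge (ltW ab) (ltW bc)).
rewrite setUC cardsU1 !inE eq_sym (lt_eqF (lt_trans ab bc)) eq_sym (lt_eqF bc) /= cards2 (lt_eqF ab).
by [].
Qed.

Lemma lenP_lt2 (a c y : P) : (lenP a c < 2)%N -> a <= y -> y <= c -> (y == a) || (y == c).
Proof.
move=> H ay yc; case: (eqVneq y a) => //= ya; case: (eqVneq y c) => //= yc'.
have := lenP_2 (a := a) (b := y) (c := c).
rewrite lt_neqAle ay eq_sym ya lt_neqAle yc yc' => /(_ erefl erefl).
by rewrite leqNgt H.
Qed.

Lemma lenP_ge2 (a c : P) : (2 <= lenP a c)%N -> exists b, (a < b) && (b < c).
Proof.
move=> H; case: (boolP [exists b, (a < b) && (b < c)]) => [/existsP //|].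
rewrite negb_exists => /forallP Hn.
have H2 : (lenP a c <= #|[set a; c]| - 1)%N.
  apply: lenP_le => y ay yc; have := Hn y.
  by rewrite !lt_neqAle ay yc !andbT negb_and !negbK eq_sym.
by move: H2; rewrite cards2; case: (a != c) => /= H2; have := leq_trans H H2.
Qed.


Lemma C_one (x y : P) : (x <= y) && (y <= x) = (y == x).
Proof. by rewrite andbC -eq_le. Qed.

Lemma C_two (p q : P) : p <= q ->
  (forall y, p <= y -> y <= q -> (y == p) || (y == q)) ->
  forall y, (p <= y) && (y <= q) = (y == p) || (y == q).
Proof.
move=> pq Hc y; apply/idP/idP => [/andP [h1 h2]|/orP [/eqP->|/eqP->]];
  by rewrite ?lexx ?pq //; apply: Hc.
Qed.

Lemma ev0 x y z : ev (0 : I3) x y z = 0.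
Proof. by rewrite /ev; case: insub => // ?; rewrite ffunE. Qed.

Lemma ev_br (u v : I3) x y z :
  ev (bracket3 u v) x y z = ev (mul3 u v) x y z - ev (mul3 v u) x y z.
Proof. by rewrite /bracket3 ev_add ev_opp. Qed.

Lemma mul_diag (u v : I3) x : ev (mul3 u v) x x x = ev u x x x * ev v x x x.
Proof.
rewrite ev_mul ?lexx // (sum_one _ (C_one x)).
by rewrite (sum_one _ (C_one x)).
Qed.

Lemma mul_cover (u v : I3) p q x2 : (forall x, ev u x x x = 0) ->
  (forall x, ev v x x x = 0) -> p < q ->
  (forall y, p <= y -> y <= q -> (y == p) || (y == q)) -> (x2 == p) || (x2 == q) ->
  ev (mul3 u v) p x2 q = ev u p p q * ev v p q q.
Proof.
move=> Hu Hv pq Hc /orP [] /eqP ->.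
  rewrite ev_mul ?lexx ?(ltW pq) // (sum_one _ (C_one p)).
  rewrite (sum_two _ _ (C_two (ltW pq) Hc)) ?(lt_eqF pq) //.
  by rewrite Hu mul0r add0r.
rewrite ev_mul ?lexx ?(ltW pq) // (sum_two _ _ (C_two (ltW pq) Hc)) ?(lt_eqF pq) //.
by rewrite !(sum_one _ (C_one q)) Hv mulr0 addr0.
Qed.

Lemma J1_diag (f : I3) x : J3 1 f -> ev f x x x = 0.
Proof.
move=> H; have Hc : (x <= x) && (x <= x) by rewrite lexx.
by rewrite (ev_chain _ Hc); apply: H => /=; rewrite lenP_diag.
Qed.

Definition Qp (h : I3) := (forall x, ev h x x x = 0) /\
  (forall p q, p < q -> (forall y, p <= y -> y <= q -> (y == p) || (y == q)) ->
     ev h p p q = ev h p q q).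

Lemma Z2_Qp (h : I3) : Z3_2 h -> Qp h.
Proof.
apply: br_ind.
- by split => *; rewrite !ev0.
- move=> f g [F1 F2] [G1 G2]; split => *; rewrite !ev_add ?F1 ?G1 ?addr0 //.
  by rewrite F2 // G2.
- move=> r f [F1 F2]; split => *; rewrite !ev_scale ?F1 ?mulr0 //.
  by rewrite F2.
- move=> u v Hu Hv; have Du := fun x => J1_diag x Hu; have Dv := fun x => J1_diag x Hv; split.
    by move=> x; rewrite ev_br !mul_diag Du Dv !mul0r subrr.
  move=> p q pq Hc; rewrite !ev_br.
  rewrite (mul_cover Du Dv pq Hc) ?eqxx // (mul_cover Dv Du pq Hc) ?eqxx //.
  by rewrite (mul_cover Du Dv pq Hc) ?eqxx ?orbT // (mul_cover Dv Du pq Hc) ?eqxx ?orbT.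
Qed.

Lemma Z3_J2 (h : I3) : Z3_3 h -> J3 2 h.
Proof.
apply: br_ind.
- by move=> t _; rewrite ffunE.
- by move=> f g Hf Hg t Ht; rewrite ffunE Hf ?Hg ?addr0.
- by move=> r f Hf t Ht; rewrite ffunE Hf ?mulr0.
move=> u v /Z2_Qp [U1 U2] /Z2_Qp [V1 V2] t.
rewrite -ev_val; case: t => [[[x1 x2] x3] /= /andP [h12 h23]] Hl.
have h13 := le_trans h12 h23.
have Hx2 := lenP_lt2 Hl h12 h23.
case: (eqVneq x1 x3) => [e13|n13].
  subst x3; have e : x2 = x1 by apply: le_anti; rewrite h23 h12.
  by subst x2; rewrite ev_br !mul_diag U1 V1 !mul0r subrr.
have pq : x1 < x3 by rewrite lt_neqAle n13 h13.
have Hc : forall y, x1 <= y -> y <= x3 -> (y == x1) || (y == x3).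
  by move=> y; apply: lenP_lt2.
have Du := U1; have Dv := V1.
rewrite ev_br (mul_cover Du Dv pq Hc Hx2) (mul_cover Dv Du pq Hc Hx2).
by rewrite U2 // V2 // mulrC subrr.
Qed.


Definition dl (a b c : P) : I3 := mkf (fun w => (w == (a, b, c))%:R).
Definition Dl (p s : P) : I3 := mkf (fun w => ((w.1.1 == p) && (w.2 == s))%:R).
Definition Tb (G : P -> P -> P -> bool) : I3 := mkf (fun w => (G w.1.1 w.1.2 w.2)%:R).

Lemma ev_Tb G x y z : ev (Tb G) x y z = (G x y z && ch x y z)%:R.
Proof. by rewrite ev_mkf; case: ifP; rewrite ?andbT ?andbF. Qed.

Lemma ev_dl a b c x y z :
  ev (dl a b c) x y z = ((x == a) && (y == b) && (z == c) && ch x y z)%:R.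
Proof. by rewrite ev_mkf !xpair_eqE; case: ifP; rewrite ?andbT ?andbF. Qed.

Lemma ev_Dl p s x y z : ev (Dl p s) x y z = ((x == p) && (z == s) && ch x y z)%:R.
Proof. by rewrite ev_mkf; case: ifP; rewrite ?andbT ?andbF. Qed.

Lemma ev_sum (I : finType) (C : pred I) (F : I -> I3) x y z :
  ev (\sum_(i | C i) F i) x y z = \sum_(i | C i) ev (F i) x y z.
Proof.
case: (boolP (ch x y z)) => H; last by rewrite ev_nchain ?big1 // => i _; rewrite ev_nchain.
by rewrite (ev_chain _ H) sum_ffunE; apply: eq_bigr => i _; rewrite (ev_chain _ H).
Qed.

Lemma ev_mul_bool (u v : I3) (Bu Bv : P -> P -> P -> bool) x1 x2 x3 :
  (forall x y z, ev u x y z = (Bu x y z)%:R) -> (forall x y z, ev v x y z = (Bv x y z)%:R) ->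
  ch x1 x2 x3 -> ev (mul3 u v) x1 x2 x3 =
  \sum_(y1 : P | ((x1 <= y1) && (y1 <= x2))%O)
       \sum_(y2 : P | ((x2 <= y2) && (y2 <= x3))%O) (Bu x1 y1 y2 && Bv y1 y2 x3)%:R.
Proof.
move=> Hu Hv H; rewrite ev_mul //; apply: eq_bigr => y1 _; apply: eq_bigr => y2 _.
by rewrite Hu Hv -natrM mulnb.
Qed.

Lemma sum_pinB (C1 C2 : pred P) (B : P -> P -> bool) a b :
  (forall y1 y2, B y1 y2 -> (y1 == a) && (y2 == b)) ->
  \sum_(y1 | C1 y1) \sum_(y2 | C2 y2) (B y1 y2)%:R = (C1 a && C2 b && B a b)%:R :> R.
Proof.
move=> H; rewrite (@sum_pin2 _ _ _ a b).
  by case: (C1 a); case: (C2 b).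
move=> y1 y2 Hn; case: (boolP (B y1 y2)) => // /H /andP [/eqP e1 /eqP e2].
by move: Hn; rewrite e1 e2 !eqxx.
Qed.


Ltac pinz a b := let y1 := fresh "y1" in let y2 := fresh "y2" in
  move=> y1 y2; case: (y1 == a); case: (y2 == b); by rewrite ?andbF ?andFb ?andbT.

Lemma comp2 (p s : P) : p < s -> bracket3 (dl p p s) (dl p s s) = Dl p s.
Proof.
move=> ps; apply: eq_ev => x1 x2 x3 H.
rewrite ev_br (ev_mul_bool (@ev_dl p p s) (@ev_dl p s s)) //.
rewrite (ev_mul_bool (@ev_dl p s s) (@ev_dl p p s)) //.
rewrite (@sum_pinB _ _ _ p s); last by pinz p s.
rewrite (@sum_pinB _ _ _ s s); last by pinz s s.
rewrite ev_Dl (gt_eqF ps) ?andbF ?andFb subr0; congr (_ %:R).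
case: (eqVneq x1 p) => [->|]; case: (eqVneq x3 s) => [->|]; rewrite ?andbF ?andFb //.
by rewrite !lexx (ltW ps) /= !eqxx ?andbT.
Qed.


Lemma comp3 (a b c : P) : a < b -> b < c -> bracket3 (Dl a b) (Dl b c) = dl a b c.
Proof.
move=> ab bc; apply: eq_ev => x1 x2 x3 H.
rewrite ev_br (ev_mul_bool (@ev_Dl a b) (@ev_Dl b c)) //.
rewrite (ev_mul_bool (@ev_Dl b c) (@ev_Dl a b)) //.
rewrite (@sum_pinB _ _ _ b b); last by pinz b b.
rewrite (@sum_pinB _ _ _ a c); last by pinz a c.
rewrite ev_dl.
case: (eqVneq x1 b) => [->|nb].
  by rewrite (gt_eqF ab) (lt_geF ab) ?andbF ?andFb subr0.
rewrite ?andbF ?andFb subr0.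
congr (_ %:R).
case: (eqVneq x1 a) => [->|]; case: (eqVneq x3 c) => [->|]; rewrite ?andbF ?andFb //.
rewrite !eqxx !lexx (ltW ab) (ltW bc) /= ?andbT.
case: (eqVneq x2 b) => [->|n2]; first by rewrite !lexx (ltW ab) (ltW bc).
by rewrite -eq_le eq_sym (negbTE n2).
Qed.


Lemma comp4 (a b c : P) : a < b -> b < c ->
  bracket3 (Dl a b) (dl a b c) = Tb (fun x y z => (x == a) && (z == c) && (y <= b)).
Proof.
move=> ab bc; apply: eq_ev => x1 x2 x3 H.
rewrite ev_br (ev_mul_bool (@ev_Dl a b) (@ev_dl a b c)) //.
rewrite (ev_mul_bool (@ev_dl a b c) (@ev_Dl a b)) //.
rewrite (@sum_pinB _ _ _ a b); last by pinz a b.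
rewrite (@sum_pinB _ _ _ b c); last by pinz b c.
rewrite ev_Tb (gt_eqF ab) ?andbF ?andFb subr0.
congr (_ %:R).
case: (eqVneq x1 a) => [->|]; case: (eqVneq x3 c) => [->|]; rewrite ?andbF ?andFb //.
rewrite !eqxx !lexx (ltW ab) (ltW bc) /= ?andbT.
case: (boolP (x2 <= b)) => h; rewrite ?andbF ?andFb ?andbT //=.
by rewrite (le_trans h (ltW bc)) andbT.
Qed.

Lemma comp5 (a b c : P) : a < b -> b < c ->
  bracket3 (dl a b c) (Dl b c) = Tb (fun x y z => (x == a) && (z == c) && (b <= y)).
Proof.
move=> ab bc; apply: eq_ev => x1 x2 x3 H.
rewrite ev_br (ev_mul_bool (@ev_dl a b c) (@ev_Dl b c)) //.
rewrite (ev_mul_bool (@ev_Dl b c) (@ev_dl a b c)) //.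
rewrite (@sum_pinB _ _ _ b c); last by pinz b c.
rewrite (@sum_pinB _ _ _ a b); last by pinz a b.
rewrite ev_Tb (lt_eqF bc) ?andbF ?andFb subr0.
congr (_ %:R).
case: (eqVneq x1 a) => [->|]; case: (eqVneq x3 c) => [->|]; rewrite ?andbF ?andFb //.
rewrite !eqxx !lexx (ltW ab) (ltW bc) /= ?andbT.
case: (boolP (b <= x2)) => h; rewrite ?andbF ?andFb ?andbT //=.
by rewrite (le_trans (ltW ab) h).
Qed.


Lemma J1_of (f : I3) : (forall x, ev f x x x = 0) -> J3 1 f.
Proof.
move=> Hf t; rewrite -ev_val; case: t => [[[x y] z] /= /andP [xy yz]] Hl.
case: (eqVneq x z) => [e|n].
  subst z; have e : y = x by apply: le_anti; rewrite xy yz.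
  by subst y; apply: Hf.
have xz : x < z by rewrite lt_neqAle n (le_trans xy yz).
by have := lenP_1 xz; rewrite leqNgt Hl.
Qed.

Lemma J1_dl (p q s : P) : p < s -> J3 1 (dl p q s).
Proof.
move=> ps; apply: J1_of => x; rewrite ev_dl.
by case: (eqVneq x p) => [->|]; rewrite ?(lt_eqF ps) ?andbF ?andFb.
Qed.

Lemma J1_Dl (p s : P) : p < s -> J3 1 (Dl p s).
Proof.
move=> ps; apply: J1_of => x; rewrite ev_Dl.
by case: (eqVneq x p) => [->|]; rewrite ?(lt_eqF ps) ?andbF ?andFb.
Qed.

Lemma Dl_Z2 (p s : P) : p < s -> Z3_2 (Dl p s).
Proof. by move=> ps; rewrite -comp2 //; apply: br1; apply: J1_dl. Qed.

Lemma dl_Z2 (a b c : P) : a < b -> b < c -> Z3_2 (dl a b c).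
Proof. by move=> ab bc; rewrite -(comp3 ab bc); apply: br1; apply: J1_Dl. Qed.

Lemma dl_Z3 (a b c : P) : a < b -> b < c -> Z3_3 (dl a b c).
Proof. by move=> ab bc; rewrite -(comp3 ab bc); apply: br1; apply: Dl_Z2. Qed.

Lemma eqA (a b c : P) : a < b -> b < c ->
  dl a a c = Tb (fun x y z => (x == a) && (z == c) && (y <= b))
             - \sum_(y | (a < y) && (y <= b)) dl a y c.
Proof.
move=> ab bc; apply: eq_ev => x1 x2 x3 H.
rewrite ev_add ev_opp ev_sum ev_Tb ev_dl (@sum_pin1 _ _ x2); last first.
  by move=> y ny; rewrite ev_dl (eq_sym x2) (negbTE ny) ?andbF ?andFb.
rewrite ev_dl.
case: (eqVneq x1 a) => [e1|]; last by rewrite ?andbF ?andFb ?subrr; case: ifP => _; rewrite ?subrr ?subr0.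
case: (eqVneq x3 c) => [e3|]; last by rewrite ?andbF ?andFb ?subrr; case: ifP => _; rewrite ?andbF ?subrr ?subr0.
subst x1 x3; rewrite H !eqxx /= !andbT.
case: (eqVneq x2 a) => [->|n]; first by rewrite ltxx /= (ltW ab) subr0.
have ax : a < x2 by rewrite lt_neqAle eq_sym n; case/andP: H.
by rewrite ax /=; case: (x2 <= b); rewrite ?subrr.
Qed.


Lemma eqC (a b c : P) : a < b -> b < c ->
  dl a c c = Tb (fun x y z => (x == a) && (z == c) && (b <= y))
             - \sum_(y | (b <= y) && (y < c)) dl a y c.
Proof.
move=> ab bc; apply: eq_ev => x1 x2 x3 H.
rewrite ev_add ev_opp ev_sum ev_Tb ev_dl (@sum_pin1 _ _ x2); last first.
  by move=> y ny; rewrite ev_dl (eq_sym x2) (negbTE ny) ?andbF ?andFb.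
rewrite ev_dl.
case: (eqVneq x1 a) => [e1|]; last by rewrite ?andbF ?andFb ?subrr; case: ifP => _; rewrite ?subrr ?subr0.
case: (eqVneq x3 c) => [e3|]; last by rewrite ?andbF ?andFb ?subrr; case: ifP => _; rewrite ?andbF ?subrr ?subr0.
subst x1 x3; rewrite H !eqxx /= !andbT.
case: (eqVneq x2 c) => [->|n]; first by rewrite ltxx /= (ltW bc) andbF subr0.
have xc : x2 < c by rewrite lt_neqAle n; case/andP: H.
by rewrite xc /= andbT; case: (b <= x2); rewrite ?subrr.
Qed.

Lemma dl_Z3_gen (a x c : P) : a <= x -> x <= c -> (2 <= lenP a c)%N -> Z3_3 (dl a x c).
Proof.
move=> ax xc /lenP_ge2 [b /andP [ab bc]].
case: (eqVneq x a) => [->|na].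
  rewrite (eqA ab bc); apply: brB.
    by rewrite -(comp4 ab bc); apply: br1; [apply: Dl_Z2|apply: dl_Z2].
  by apply: brsum => y /andP [ay yb]; apply: dl_Z3 ay (le_lt_trans yb bc).
case: (eqVneq x c) => [->|nc].
  rewrite (eqC ab bc); apply: brB.
    by rewrite -(comp5 ab bc); apply: br1; [apply: dl_Z2|apply: Dl_Z2].
  by apply: brsum => y /andP [hb yc]; apply: dl_Z3 (lt_le_trans ab hb) yc.
by apply: dl_Z3; rewrite lt_neqAle ?ax ?xc ?nc // eq_sym na.
Qed.

Lemma decomp (f : I3) :
  f = \sum_(t : chain3 P) scale3 (f t) (dl (val t).1.1 (val t).1.2 (val t).2).
Proof.
apply/ffunP => u; rewrite sum_ffunE (bigD1 u) //= big1 ?addr0.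
  by rewrite !ffunE -!surjective_pairing eqxx mulr1.
move=> t ntu; rewrite !ffunE -!surjective_pairing.
by rewrite val_eqE eq_sym (negbTE ntu) mulr0.
Qed.

Lemma J2_Z3 (f : I3) : J3 2 f -> Z3_3 f.
Proof.
move=> Hf; rewrite (decomp f); apply: brsum => t _.
case: (ltnP (lenP (val t).1.1 (val t).2) 2) => Hl.
  by rewrite Hf // scale3_0l; apply: br0.
apply: brZ; case: t Hl => [[[x y] z] /= /andP [xy yz]] Hl.
exact: dl_Z3_gen.
Qed.

Lemma J_ev k (f : I3) x y z : J3 k f -> (lenP x z < k)%N -> ev f x y z = 0.
Proof.
move=> Hf Hl; case: (boolP (ch x y z)) => H; last by rewrite ev_nchain.
by rewrite (ev_chain _ H); apply: Hf.
Qed.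

Lemma J2_mul (f g : I3) : J3 2 f -> J3 2 (mul3 f g) /\ J3 2 (mul3 g f).
Proof.
move=> Hf; split => t; rewrite -ev_val; case: t => [[[x1 x2] x3] /= H] Hl;
  rewrite ev_mul //; apply: big1 => y1 /andP [h1 h2]; apply: big1 => y2 /andP [h3 h4].
  case/orP: (lenP_lt2 Hl (le_trans h1 (le_trans h2 h3)) h4) => /eqP ->.
    by rewrite (J_ev _ Hf) ?mul0r // lenP_diag.
  by rewrite (J_ev _ Hf) ?mul0r.
case/orP: (lenP_lt2 Hl h1 (le_trans h2 (le_trans h3 h4))) => /eqP ->.
  by rewrite (J_ev _ Hf) ?mulr0.
by rewrite (J_ev _ Hf) ?mulr0 // lenP_diag.
Qed.

End Aux.

Theorem lemma2p6 (d : Order.disp_t) (P : finPOrderType d) (R : comPzRingType) :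
  (forall f : I3 P R, Z3_3 f <-> J3 2 f) /\
  (* Z^3_3(P,R) is an ideal of I^3(P,R) *)
  (Z3_3 (0 : I3 P R) /\
   (forall f g : I3 P R, Z3_3 f -> Z3_3 g -> Z3_3 (f + g)) /\
   (forall (r : R) (f : I3 P R), Z3_3 f -> Z3_3 (scale3 r f)) /\
   (forall f g : I3 P R, Z3_3 f -> Z3_3 (mul3 f g) /\ Z3_3 (mul3 g f))).
Proof.
split; first by move=> f; split; [apply: Z3_J2 | apply: J2_Z3].
split; first exact: br0.
split; first by move=> f g; apply: brD.
split; first by move=> r f; apply: brZ.
move=> f g /Z3_J2 /(J2_mul g) [H1 H2]; split; exact: J2_Z3.
Qed.
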